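(* Let $\iota:\emptyset\to\{\bullet\}$, let $M:D\to E$ be the map with $D=\{x,y,z,c\}$ having open sets $\emptyset,\{x,y,z\},D$, $E=\{u,v\}$ antidiscrete, $M(x)=M(y)=u$, $M(z)=M(c)=v$, and let $k:\{\bullet\}\to S$ send the point to the closed point $c$ of the Sierpinski space $S=\{o,c\}$ (open sets $\emptyset,\{o\},S$). Then, in $\mathrm{Top}$, $\{\iota\}^{rllrrll}=\{M\}^{ll}=\{k\}^l$, and this is the class of continuous maps with dense image.
   Context: For continuous maps $f:A\to B$, $g:C\to D'$, $f\pitchfork g$ means: for all continuous $t:A\to C$, $b:B\to D'$ with $g\circ t=b\circ f$ there is continuous $d:B\to C$ with $d\circ f=t$, $g\circ d=b$. For a class $P$, $P^l=\{f: f\pitchfork g\ \forall g\in P\}$, $P^r=\{g: f\pitchfork g\ \forall f\in P\}$; for a word $w$ in $l,r$, $P^w$ applies these operations from left to right. *)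

(* Defs.v *)
From HB Require Import structures.
From mathcomp Require Import all_boot all_classical topology.
Set Implicit Arguments.
Unset Strict Implicit.
Unset Printing Implicit Defensive.
Local Open Scope classical_set_scope.

Record cmap : Type := CMap {
  csrc : topologicalType;
  ctgt : topologicalType;
  cfun : csrc -> ctgt;
  cfun_cont : continuous cfun }.
Arguments cfun c _ : clear implicits.
Arguments CMap {csrc ctgt cfun} _.

Definition mclass := cmap -> Prop.

Definition lifts (f g : cmap) : Prop :=
  forall (t : csrc f -> csrc g) (b : ctgt f -> ctgt g),
    continuous t -> continuous b ->
    cfun g \o t = b \o cfun f ->
    exists d : ctgt f -> csrc g,
      [/\ continuous d, d \o cfun f = t & cfun g \o d = b].

Definition lorth (P : mclass) : mclass := fun f => forall g, P g -> lifts f g.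
Definition rorth (P : mclass) : mclass := fun g => forall f, P f -> lifts f g.

Inductive letter := l_ | r_.
Definition orth (a : letter) := if a is l_ then lorth else rorth.

(** P^w : the letters of w are applied from left to right *)
Fixpoint orthw (P : mclass) (w : seq letter) : mclass :=
  if w is a :: w' then orthw (orth a P) w' else P.

Definition single (f : cmap) : mclass := fun g => g = f.

Definition same_class (P Q : mclass) : Prop := forall f, P f <-> Q f.

Definition dense_image : mclass := fun f => dense (range (cfun f)).

(** * Finite (Alexandrov) topologies given by the minimal open neighbourhood
      [U p] of each point: the open sets are the sets A with U p ⊆ A for p ∈ A *)

Definition alex_nbhs (T : Type) (U : T -> set T) (p : T) : set_system T :=
  fun A => U p `<=` A.

Lemma alex_filter (T : Type) (U : T -> set T) :
  (forall p, U p p) -> forall p, ProperFilter (alex_nbhs U p).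
Proof.
move=> Upp p.
have F : Filter (alex_nbhs U p).
  apply: Build_Filter.
  + by [].
  + by move=> A B HA HB q Uq; split; [apply: HA|apply: HB].
  + by move=> A B AB HA q Uq; apply: AB; apply: HA.
apply: (@Build_ProperFilter_ex _ _ _ F) => A H.
by exists p; apply: H.
Qed.

Lemma alex_singleton (T : Type) (U : T -> set T) :
  (forall p, U p p) -> forall p A, alex_nbhs U p A -> A p.
Proof. by move=> Upp p A H; apply: H. Qed.

Lemma alex_nbhs_nbhs (T : Type) (U : T -> set T) :
  (forall p q, U p q -> U q `<=` U p) ->
  forall p A, alex_nbhs U p A -> alex_nbhs U p (alex_nbhs U ^~ A).
Proof. by move=> tr p A H q Upq r Uqr; apply: H; apply: (tr p q). Qed.

Inductive emp : Set := .
Definition emp_to_void (e : emp) : void := match e with end.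
Definition void_to_emp (v : void) : emp := match v with end.
Lemma emp_K : cancel emp_to_void void_to_emp. Proof. by case. Qed.
HB.instance Definition _ := Countable.copy emp (can_type emp_K).
Definition U_emp (p : emp) : set emp := setT.
HB.instance Definition _ := hasNbhs.Build emp (alex_nbhs U_emp).
HB.instance Definition _ := Nbhs_isNbhsTopological.Build emp
  (@alex_filter _ U_emp (fun _ => I)) (@alex_singleton _ U_emp (fun _ => I))
  (@alex_nbhs_nbhs _ U_emp (fun _ _ _ _ _ => I)).

Inductive pt : Set := bullet.
Definition pt_to_unit (p : pt) : unit := tt.
Definition unit_to_pt (u : unit) : pt := bullet.
Lemma pt_K : cancel pt_to_unit unit_to_pt. Proof. by case. Qed.
HB.instance Definition _ := Countable.copy pt (can_type pt_K).
Definition U_pt (p : pt) : set pt := setT.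
HB.instance Definition _ := hasNbhs.Build pt (alex_nbhs U_pt).
HB.instance Definition _ := Nbhs_isNbhsTopological.Build pt
  (@alex_filter _ U_pt (fun _ => I)) (@alex_singleton _ U_pt (fun _ => I))
  (@alex_nbhs_nbhs _ U_pt (fun _ _ _ _ _ => I)).

(** ** D = {x,y,z,c} with open sets ∅, {x,y,z}, D *)
Inductive Dpt : Set := Dx | Dy | Dz | Dc.
Definition Dpt_enc (p : Dpt) : nat :=
  match p with Dx => 0 | Dy => 1 | Dz => 2 | Dc => 3 end.
Definition Dpt_dec (n : nat) : Dpt :=
  match n with 0 => Dx | 1 => Dy | 2 => Dz | _ => Dc end.
Lemma Dpt_K : cancel Dpt_enc Dpt_dec. Proof. by case. Qed.
HB.instance Definition _ := Countable.copy Dpt (can_type Dpt_K).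
Definition U_D (p : Dpt) : set Dpt :=
  match p with Dc => setT | _ => [set q | q <> Dc] end.
Lemma U_D_refl p : U_D p p. Proof. by case: p. Qed.
Lemma U_D_tr p q : U_D p q -> U_D q `<=` U_D p.
Proof.
by case: p; case: q => /= H r Hr //; exfalso; apply: H.
Qed.
HB.instance Definition _ := hasNbhs.Build Dpt (alex_nbhs U_D).
HB.instance Definition _ := Nbhs_isNbhsTopological.Build Dpt
  (alex_filter U_D_refl) (alex_singleton U_D_refl) (alex_nbhs_nbhs U_D_tr).

Inductive Ept : Set := Eu | Ev.
Definition Ept_enc (p : Ept) : bool := if p is Eu then true else false.
Definition Ept_dec (b : bool) : Ept := if b then Eu else Ev.
Lemma Ept_K : cancel Ept_enc Ept_dec. Proof. by case. Qed.
HB.instance Definition _ := Countable.copy Ept (can_type Ept_K).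
Definition U_E (p : Ept) : set Ept := setT.
HB.instance Definition _ := hasNbhs.Build Ept (alex_nbhs U_E).
HB.instance Definition _ := Nbhs_isNbhsTopological.Build Ept
  (@alex_filter _ U_E (fun _ => I)) (@alex_singleton _ U_E (fun _ => I))
  (@alex_nbhs_nbhs _ U_E (fun _ _ _ _ _ => I)).

(** ** Sierpinski space S = {o,c} with open sets ∅, {o}, S *)
Inductive Spt : Set := So | Sc.
Definition Spt_enc (p : Spt) : bool := if p is So then true else false.
Definition Spt_dec (b : bool) : Spt := if b then So else Sc.
Lemma Spt_K : cancel Spt_enc Spt_dec. Proof. by case. Qed.
HB.instance Definition _ := Countable.copy Spt (can_type Spt_K).
Definition U_S (p : Spt) : set Spt :=
  match p with So => [set So] | Sc => setT end.
Lemma U_S_refl p : U_S p p. Proof. by case: p. Qed.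
Lemma U_S_tr p q : U_S p q -> U_S q `<=` U_S p.
Proof. by case: p; case: q => /= H r Hr //; move: H; rewrite /set1 /=. Qed.
HB.instance Definition _ := hasNbhs.Build Spt (alex_nbhs U_S).
HB.instance Definition _ := Nbhs_isNbhsTopological.Build Spt
  (alex_filter U_S_refl) (alex_singleton U_S_refl) (alex_nbhs_nbhs U_S_tr).

Definition iota_fun (e : emp) : pt := match e with end.
Lemma iota_cont : continuous iota_fun. Proof. by case. Qed.
Definition iota_map : cmap := CMap iota_cont.

Definition M_fun (p : Dpt) : Ept :=
  match p with Dx | Dy => Eu | Dz | Dc => Ev end.
Lemma M_cont : continuous M_fun.
Proof.
move=> p A HA; have HA' : forall e, A e by move=> e; apply: HA.
by move=> q _; exact: HA'.
Qed.
Definition M_map : cmap := CMap M_cont.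

Definition k_fun (p : pt) : Spt := Sc.
Lemma k_cont : continuous k_fun.
Proof.
move=> p A HA; have HA' : A Sc by apply: HA.
by move=> q _; exact: HA'.
Qed.
Definition k_map : cmap := CMap k_cont.

(* Main.v *)
Require Import Defs.
From HB Require Import structures.
From mathcomp Require Import all_boot all_classical topology.
Set Implicit Arguments. Unset Strict Implicit. Unset Printing Implicit Defensive.
Local Open Scope classical_set_scope.
Definition P1 := rorth (single iota_map).
Definition L := lorth P1.
Definition P3 := lorth L.
Definition P4 := rorth P3.
Definition P5 := rorth P4.
Definition P6 := lorth P5.
Definition P7 := lorth P6.

Lemma orthw_eq : orthw (single iota_map) [:: r_; l_; l_; r_; r_; l_; l_] = P7.
Proof. by []. Qed.

Lemma alex_cont (B T : topologicalType) (U : T -> set T)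
  (hU : forall p A, nbhs p A = (U p `<=` A)) (f : B -> T) :
  (forall p, nbhs p (f @^-1` U (f p))) -> continuous f.
Proof.
move=> H p A; rewrite /= hU => HA.
by apply: filterS (H p) => q /HA.
Qed.

Lemma alex_open (T : topologicalType) (U : T -> set T)
  (hU : forall p A, nbhs p A = (U p `<=` A)) (A : set T) :
  (forall p, A p -> U p `<=` A) -> open A.
Proof. by move=> H; rewrite openE => p Ap; rewrite /interior hU; apply: H. Qed.

Lemma open_So : open [set So].
Proof. by apply: (@alex_open _ U_S) => // p ->. Qed.

Lemma pt_eq (x y : pt) : x = y. Proof. by case: x; case: y. Qed.

Lemma cont_to_S (B : topologicalType) (f : B -> Spt) :
  open (f @^-1` [set So]) -> continuous f.
Proof.
move=> oO; apply: (@alex_cont _ _ U_S) => // p.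
have [E|E] : f p = So \/ f p = Sc by case: (f p); [left|right].
  rewrite E /=; apply: open_nbhs_nbhs; split => //.
by rewrite E /=; apply: filterT.
Qed.

Lemma kl_dense f : lorth (single k_map) f <-> dense_image f.
Proof.
split.
  move=> H O [x Ox] oO.
  case: (pselect (O `&` range (cfun f) !=set0)) => // hno; exfalso.
  pose b p := if `[< O p >] then So else Sc.
  have bc : continuous b.
    apply: cont_to_S; suff -> : b @^-1` [set So] = O by [].
    apply/seteqP; split => p; rewrite /b /=.
      by case: (pselect (O p)) => [//|/asboolF ->].
    by move/asboolT ->.
  have := H k_map erefl (fun _ => bullet) b (@cst_continuous _ pt bullet) bc.
  case.
    apply/funext => a /=; rewrite /b; case: (pselect (O (cfun f a))) => [Oa|/asboolF -> //].
    by exfalso; apply: hno; exists (cfun f a); split => //; exists a.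
  move=> d [_ _ /(congr1 (fun h => h x))] /=.
  by rewrite /b asboolT.
move=> Hd g -> t b tc bc tb.
exists (fun _ => bullet); split.
- exact: cst_continuous.
- by apply/funext => a; apply: pt_eq.
- apply/funext => y /=; case E: (b y) => [|//]; exfalso.
  have oO : open (b @^-1` [set So]) by move/continuousP: bc; apply; exact: open_So.
  have [z [bz [a _ fa]]] := Hd _ (ex_intro _ y E) oO.
  move: bz; rewrite /= -fa.
  by have := congr1 (fun h => h a) tb => /= <-.
Qed.
Definition cinj (g : cmap) :=
  injective (cfun g) /\ (forall F, closed F -> closed (cfun g @` F)).

Lemma open_notDc : open [set q : Dpt | q <> Dc].
Proof. by apply: (@alex_open _ U_D) => // -[] H q Hq //; exact: (False_ind _ (H erefl)). Qed.

Lemma closed_Dc : closed [set Dc].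
Proof.
rewrite -openC; suff -> : ~` [set Dc] = [set q : Dpt | q <> Dc] by exact: open_notDc.
by apply/seteqP; split => q /=.
Qed.

Lemma cont_to_D (B : topologicalType) (d : B -> Dpt) :
  closed (d @^-1` [set Dc]) -> continuous d.
Proof.
move=> cl; apply: (@alex_cont _ _ U_D) => // p.
have [E|E] := pselect (d p = Dc).
  by rewrite E; apply: filterT.
have -> : d @^-1` U_D (d p) = ~` (d @^-1` [set Dc]).
  by apply/seteqP; split => q /=; case: (d p) E => //= _; case: (d q).
by apply: open_nbhs_nbhs; split; [rewrite openC|].
Qed.

Lemma cont_D_closed (B : topologicalType) (d : B -> Dpt) :
  continuous d -> closed (d @^-1` [set Dc]).
Proof. by move/continuous_closedP; apply; exact: closed_Dc. Qed.

Lemma cont_to_E (B : topologicalType) (b : B -> Ept) : continuous b.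
Proof. by apply: (@alex_cont _ _ U_E) => // p; apply: filterT. Qed.

Lemma cinj_liftM g : cinj g -> lifts g M_map.
Proof.
case=> ginj gcl t b tc bc tb.
pose d p := match pselect (exists a, cfun g a = p) with
  | left h => t (projT1 (cid h))
  | right _ => if b p is Eu then Dx else Dz end.
have dg a : d (cfun g a) = t a.
  rewrite /d; case: pselect => [h|[]]; last by exists a.
  by case: (cid h) => a' /= /ginj ->.
have dn p : ~ (exists a, cfun g a = p) -> d p = if b p is Eu then Dx else Dz.
  by rewrite /d; case: pselect.
exists d; split.
- apply: cont_to_D.
  suff -> : d @^-1` [set Dc] = cfun g @` (t @^-1` [set Dc]).
    by apply: gcl; apply: cont_D_closed.
  apply/seteqP; split => p /=.
    case: (pselect (exists a, cfun g a = p)) => [[a <-]|hn].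
      by rewrite dg => ta; exists a.
    by rewrite dn //; case: (b p).
  by case=> a ta <-; rewrite dg.
- by apply/funext => a; rewrite /= dg.
- apply/funext => p /=.
  case: (pselect (exists a, cfun g a = p)) => [[a <-]|hn].
    by rewrite dg; have := congr1 (fun h => h a) tb.
  by rewrite dn //; case: (b p).
Qed.

Lemma liftM_cinj g : lifts g M_map -> cinj g.
Proof.
move=> H.
have ginj : injective (cfun g).
  move=> a1 a2 e; apply: contrapT => ne.
  pose t a := if `[< a = a2 >] then Dy else Dx.
  have tc : continuous t.
    apply: cont_to_D; suff -> : t @^-1` [set Dc] = set0 by exact: closed0.
    by apply/seteqP; split => a //=; rewrite /t; case: `[< _ >].
  have [] := H t (fun _ => Eu) tc (@cont_to_E _ _).
    by apply/funext => a /=; rewrite /t; case: `[< _ >].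
  move=> d [_ /(congr1 (fun h => (h a1, h a2))) /= [] + + _].
  rewrite /t e asboolF // asboolT // => -> //.
split => // F clF.
pose t a := if `[< F a >] then Dc else Dx.
pose b p := if `[< (cfun g @` F) p >] then Ev else Eu.
have tc : continuous t.
  apply: cont_to_D; suff -> : t @^-1` [set Dc] = F by [].
  apply/seteqP; split => a /=; rewrite /t.
    by case: (pselect (F a)) => [//|/asboolF ->].
  by move/asboolT ->.
have [] := H t b tc (@cont_to_E _ _).
  apply/funext => a /=; rewrite /t /b.
  case: (pselect (F a)) => [Fa|nFa].
    by rewrite asboolT // asboolT //; exists a.
  by rewrite asboolF // asboolF // => -[a' Fa' /ginj ea]; apply: nFa; rewrite -ea.
move=> d [dc dg gd].
suff -> : cfun g @` F = d @^-1` [set Dc] by apply: cont_D_closed.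
apply/seteqP; split => p /=.
  case=> a Fa <-; have := congr1 (fun h => h a) dg => /= ->.
  by rewrite /t asboolT.
move=> dp; have := congr1 (fun h => h p) gd => /=; rewrite dp /b.
by case: (pselect ((cfun g @` F) p)) => [//|/asboolF ->].
Qed.

Lemma dense_all (T : topologicalType) (S A : set T) :
  dense S -> closed A -> S `<=` A -> A = setT.
Proof.
move=> dS cA SA; apply/seteqP; split => // p _; apply: contrapT => nA.
have [q [nAq Sq]] := dS (~` A) (ex_intro _ p nA) (eq_ind_r id cA (openC A)).
exact: nAq (SA _ Sq).
Qed.

Lemma dense_lift_cinj f h : dense_image f -> cinj h -> lifts f h.
Proof.
move=> df [hinj hcl] t b tc bc tb.
have all : forall p, exists x, cfun h x = b p.
  move=> p.
  have : b @^-1` (cfun h @` setT) = setT.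
    apply: (dense_all df).
    - by move/continuous_closedP: bc; apply; apply: hcl; exact: closedT.
    - by move=> _ [a _ <-] /=; exists (t a) => //; have := congr1 (fun k => k a) tb.
  by move/seteqP => [_ /(_ p I)] [x _ <-]; exists x.
pose d p := projT1 (cid (all p)).
have hd p : cfun h (d p) = b p by rewrite /d; case: cid.
exists d; split.
- apply/continuous_closedP => F clF.
  suff -> : d @^-1` F = b @^-1` (cfun h @` F).
    by move/continuous_closedP: bc; apply; apply: hcl.
  apply/seteqP; split => p /=.
    by move=> Fd; exists (d p) => //.
  by case=> x Fx; rewrite -hd => /hinj <-.
- apply/funext => a /=; apply: hinj; rewrite hd.
  by have := congr1 (fun k => k a) tb.
- by apply/funext => p /=.
Qed.

Lemma k_cinj : cinj k_map.
Proof.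
split; first by move=> x y _; apply: pt_eq.
move=> F _.
case: (pselect (F bullet)) => [Fb|nFb].
  suff -> : k_fun @` F = [set Sc].
    rewrite -openC; suff -> : ~` [set Sc] = [set So] by exact: open_So.
    by apply/seteqP; split => -[] /= H //.
  apply/seteqP; split => p /=; first by case=> x _ <-.
  by move=> ->; exists bullet.
suff -> : k_fun @` F = set0 by exact: closed0.
by apply/seteqP; split => p //= [x Fx _]; apply: nFb; case: x Fx.
Qed.
Lemma id_cont (T : topologicalType) : continuous (fun x : T => x).
Proof. by move=> p A. Qed.

Lemma to_pt_cont (B : topologicalType) (f : B -> pt) : continuous f.
Proof. by apply: (@alex_cont _ _ U_pt) => // p; apply: filterT. Qed.

Lemma alex_cont_from (T B : topologicalType) (U : T -> set T)
  (hU : forall p A, nbhs p A = (U p `<=` A)) (f : T -> B) :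
  (forall p q A, U p q -> nbhs (f p) A -> A (f q)) -> continuous f.
Proof.
move=> H p A HA; suff : nbhs p (f @^-1` A) by [].
by rewrite hU => q Upq; apply: H Upq HA.
Qed.

Lemma pt_cont (B : topologicalType) (f : pt -> B) : continuous f.
Proof.
apply: (@alex_cont_from _ _ U_pt) => // p q A _.
by rewrite (pt_eq q p); apply: nbhs_singleton.
Qed.

Lemma surj_P1 g : (forall y, exists x, cfun g x = y) -> P1 g.
Proof.
move=> sg f -> t b tc bc tb.
have [x gx] := sg (b bullet).
exists (fun _ => x); split.
- exact: cst_continuous.
- by apply/funext => -[].
- by apply/funext => -[].
Qed.

Lemma P1_surj g : P1 g -> forall y, exists x, cfun g x = y.
Proof.
move=> H y.
have [] := H iota_map erefl (fun e : emp => match e with end) (fun _ : pt => y)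
  (fun e => match e with end) (@cst_continuous _ _ y).
  by apply/funext => -[].
by move=> d [_ _ /(congr1 (fun h => h bullet)) /= <-]; exists (d bullet).
Qed.

Lemma L_retract g : L g -> csrc g ->
  exists r : ctgt g -> csrc g, continuous r /\ forall x, r (cfun g x) = x.
Proof.
move=> Lg x0.
pose pm := @CMap (csrc g) pt (fun _ => bullet) (@to_pt_cont _ _).
have sp : P1 pm by apply: surj_P1 => -[]; exists x0.
have [] := Lg pm sp (fun x => x) (fun _ => bullet) (@id_cont _) (@to_pt_cont _ _).
  by apply/funext => x.
by move=> d [dc /= dg _]; exists d; split => // x; have := congr1 (fun h => h x) dg.
Qed.

Lemma L_inj g : L g -> injective (cfun g).
Proof.
move=> Lg x1 x2 e; have [r [_ rg]] := L_retract Lg x1.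
by rewrite -(rg x1) e rg.
Qed.

(* the space Zy: Y with the point y made isolated *)
Definition Zy (Y : topologicalType) (y : Y) : Type := Y.
Definition nbhsZ (Y : topologicalType) (y : Y) (p : Y) (A : set Y) :=
  (p = y -> A y) /\ (p <> y -> nbhs p (A `|` [set y])).

Section ZySec.
Variables (Y : topologicalType) (y : Y).
Lemma nbhsZ_filter p : ProperFilter (nbhsZ y p).
Proof.
have F : Filter (nbhsZ y p).
  apply: Build_Filter.
  + split => // _; apply: (@filterS _ (nbhs p) _ setT); last exact: filterT.
    by move=> q _; left.
  + move=> A B [HA1 HA2] [HB1 HB2]; split.
      by move=> e; split; [apply: HA1|apply: HB1].
    move=> ne; apply: filterS (filterI (HA2 ne) (HB2 ne)).
    move=> q [[Aq|qy] [Bq|qy']]; by [left|right].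
  + move=> A B AB [HA1 HA2]; split.
      by move=> e; apply: AB; apply: HA1.
    by move=> ne; apply: filterS (HA2 ne) => q [Aq|->]; [left; apply: AB|right].
apply: (@Build_ProperFilter_ex _ _ _ F) => A [HA1 HA2].
case: (pselect (p = y)) => [e|ne]; first by exists y; apply: HA1.
by exists p; have := nbhs_singleton (HA2 ne) => -[//|/ne []].
Qed.

Lemma nbhsZ_singleton p A : nbhsZ y p A -> A p.
Proof.
move=> [HA1 HA2]; case: (pselect (p = y)) => [e|ne]; first by rewrite e; apply: HA1.
by have := nbhs_singleton (HA2 ne) => -[//|/ne []].
Qed.

Lemma nbhsZ_nbhs p A : nbhsZ y p A -> nbhsZ y p (nbhsZ y ^~ A).
Proof.
move=> [HA1 HA2]; case: (pselect (p = y)) => [e|ne].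
  split=> [_|/(_ e) []]; split => [_|/(_ erefl) []].
  exact: HA1 e.
split=> [/ne []|_].
apply: filterS (nbhs_interior (HA2 ne)) => q Iq.
case: (pselect (q = y)) => [qy|nq]; [by right|left].
by split => // /nq.
Qed.
End ZySec.

HB.instance Definition _ (Y : topologicalType) (y : Y) := Choice.copy (Zy y) Y.
HB.instance Definition _ (Y : topologicalType) (y : Y) :=
  hasNbhs.Build (Zy y) (nbhsZ y).
HB.instance Definition _ (Y : topologicalType) (y : Y) :=
  Nbhs_isNbhsTopological.Build (Zy y)
  (@nbhsZ_filter Y y) (@nbhsZ_singleton Y y) (@nbhsZ_nbhs Y y).

Lemma L_closed g : L g -> closed (range (cfun g)).
Proof.
move=> Lg y cly; apply: contrapT => ny.
have idc : continuous (fun p : Zy y => (p : ctgt g)).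
  move=> p N /= Np; split.
    by move=> e; rewrite -e; apply: nbhs_singleton Np.
  by move=> _; apply: filterS Np => q Nq; left.
pose zm := @CMap (Zy y) (ctgt g) (fun p : Zy y => (p : ctgt g)) idc.
have sz : P1 zm by apply: surj_P1 => q; exists q.
have gc : continuous (fun x : csrc g => (cfun g x : Zy y)).
  move=> x A [_ HA2].
  have gx : cfun g x <> y by move=> e; apply: ny; exists x.
  have H : nbhs x (cfun g @^-1` (A `|` [set y])) := @cfun_cont g x _ (HA2 gx).
  suff : nbhs x (cfun g @^-1` A) by [].
  by apply: filterS H => q /= [//|e]; exfalso; apply: ny; exists q.
have [] := Lg zm sz (fun x : csrc g => (cfun g x : Zy y)) (fun p => p) gc (@id_cont _).
  by apply/funext.
move=> d [dc _ /= dd].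
have ed : forall q, d q = q by move=> q; have := congr1 (fun h => h q) dd.
have : nbhs y (d @^-1` [set y]).
  apply: (dc y); rewrite ed; split => // /(_ erefl) [].
have -> : d @^-1` [set y] = [set y] by apply/seteqP; split => q /=; rewrite ed.
move=> Ny; have [q [[x _ gx] /= qy]] := cly _ Ny.
by apply: ny; exists x => //; rewrite gx.
Qed.

Definition bdisc : Type := bool.
HB.instance Definition _ := Choice.copy bdisc bool.
Definition U_b (p : bdisc) : set bdisc := [set p].
Lemma U_b_refl p : U_b p p. Proof. by []. Qed.
Lemma U_b_tr p q : U_b p q -> U_b q `<=` U_b p.
Proof. by move=> -> r. Qed.
HB.instance Definition _ := hasNbhs.Build bdisc (alex_nbhs U_b).
HB.instance Definition _ := Nbhs_isNbhsTopological.Build bdisc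
  (alex_filter U_b_refl) (alex_singleton U_b_refl) (alex_nbhs_nbhs U_b_tr).

Lemma bdisc_cont (B : topologicalType) (f : bdisc -> B) : continuous f.
Proof.
apply: (@alex_cont_from _ _ U_b) => // p q A ->.
by apply: nbhs_singleton.
Qed.

Definition e2_fun (u : pt) : bdisc := false.
Definition e2_map : cmap := CMap (@pt_cont _ e2_fun).

Lemma e2_L : L e2_map.
Proof.
move=> g /P1_surj sg t b tc bc tb.
have [x1 gx1] := sg (b true).
exists (fun q : bdisc => if q then x1 else t bullet); split.
- exact: bdisc_cont.
- by apply/funext => u; case: u.
- apply/funext => -[] //=.
  by have := congr1 (fun h => h bullet) tb.
Qed.

Lemma P3_clopen f : P3 f -> forall K, open K -> closed K ->
  (forall a, ~ K (cfun f a)) -> forall p, ~ K p.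
Proof.
move=> Pf K oK cK nK p Kp.
pose b q : bdisc := `[< K q >].
have bc : continuous b.
  apply: (@alex_cont _ _ U_b) => // q.
  case: (pselect (K q)) => Kq.
    apply: filterS (open_nbhs_nbhs (conj oK Kq)) => r Kr /=.
    by rewrite /U_b /b /= !asboolT.
  apply: filterS (open_nbhs_nbhs (conj (eq_ind_r id cK (openC K)) Kq)) => r Kr /=.
  by rewrite /U_b /b /= !asboolF.
have [] := Pf e2_map e2_L (fun _ => bullet) b (@to_pt_cont _ _) bc.
  by apply/funext => a /=; rewrite /b asboolF.
move=> d [_ _ /(congr1 (fun h => h p))] /=.
by rewrite /b asboolT.
Qed.
Definition f1_map : cmap := CMap (@bdisc_cont pt (fun _ => bullet)).

Lemma f1_P3 : P3 f1_map.
Proof.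
move=> g Lg t b tc bc tb.
have et q : t q = t true.
  apply: (L_inj Lg).
  have e1 := congr1 (fun h => h q) tb; have e2 := congr1 (fun h => h true) tb.
  by rewrite /= in e1 e2; rewrite e1 e2.
exists (fun _ => t true); split.
- exact: cst_continuous.
- by apply/funext => q /=; rewrite et.
- apply/funext => u /=; rewrite (pt_eq u bullet).
  exact: (congr1 (fun h => h true) tb).
Qed.

Lemma P4_inj g : P4 g -> injective (cfun g).
Proof.
move=> Pg c1 c2 e.
have [] := Pg f1_map f1_P3 (fun q : bdisc => if q then c1 else c2)
  (fun _ : pt => cfun g c1) (@bdisc_cont _ _) (@pt_cont _ _).
  by apply/funext => -[].
move=> d [_ /= /[dup] /(congr1 (fun h => h true)) /= <-].
by move/(congr1 (fun h => h false)) => /= <-.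
Qed.

Definition OC (C C' : topologicalType) (g : C -> C') (F : set C) (q : C') : Type :=
  option C.

Definition nbhsO (C C' : topologicalType) (g : C -> C') (F : set C) (q : C')
  (p : option C) (A : set (option C)) : Prop :=
  match p with
  | Some c => nbhs c (fun x => A (Some x))
  | None => A None /\ exists V, nbhs q V /\ exists W : set C,
      [/\ open W, (forall x, F x -> V (g x) -> W x) & (forall x, W x -> A (Some x))]
  end.

Section OCSec.
Variables (C C' : topologicalType) (g : C -> C') (F : set C) (q : C').
Local Notation nb := (nbhsO g F q).

Lemma nbhsO_singleton p A : nb p A -> A p.
Proof. by case: p => [c /nbhs_singleton //|[]]. Qed.

Lemma nbhsO_filter p : ProperFilter (nb p).
Proof.
have Fi : Filter (nb p).
  case: p => [c|]; apply: Build_Filter => /=.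
  - exact: filterT.
  - by move=> A B HA HB; apply: filterI.
  - by move=> A B AB HA; apply: filterS HA => x /AB.
  - split => //; exists setT; split; first exact: filterT.
    by exists setT; split => //; exact: openT.
  - move=> A B [HA [V1 [N1 [W1 [o1 s1 w1]]]]] [HB [V2 [N2 [W2 [o2 s2 w2]]]]].
    split => //; exists (V1 `&` V2); split; first exact: filterI.
    exists (W1 `&` W2); split; first exact: openI.
      by move=> x Fx [? ?]; split; [apply: s1|apply: s2].
    by move=> x [? ?]; split; [apply: w1|apply: w2].
  - move=> A B AB [HA [V [N [W [o s w]]]]]; split; first exact: AB.
    by exists V; split => //; exists W; split => // x /w /AB.
apply: (@Build_ProperFilter_ex _ _ _ Fi) => A HA.
by exists p; apply: nbhsO_singleton.
Qed.

Lemma nbhsO_nbhs p A : nb p A -> nb p (nb ^~ A).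
Proof.
case: p => [c /= H|[HA [V [N [W [o s w]]]]]].
  exact: nbhs_interior H.
split; first by split => //; exists V; split => //; exists W.
exists V; split => //; exists W; split => //; move=> x Wx /=.
have : nbhs x W by apply: open_nbhs_nbhs; split.
by apply: filterS => y /w.
Qed.
End OCSec.

HB.instance Definition _ (C C' : topologicalType) (g : C -> C') (F : set C) (q : C') :=
  Choice.copy (OC g F q) (option C).
HB.instance Definition _ (C C' : topologicalType) (g : C -> C') (F : set C) (q : C') :=
  hasNbhs.Build (OC g F q) (nbhsO g F q).
HB.instance Definition _ (C C' : topologicalType) (g : C -> C') (F : set C) (q : C') :=
  Nbhs_isNbhsTopological.Build (OC g F q)
  (@nbhsO_filter C C' g F q) (@nbhsO_singleton C C' g F q) (@nbhsO_nbhs C C' g F q).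

Section OCSec2.
Variables (C C' : topologicalType) (g : C -> C') (F : set C) (q : C').

Lemma Some_cont : continuous (fun x : C => (Some x : OC g F q)).
Proof. by move=> c A HA. Qed.

Definition bO (p : OC g F q) : C' := if p is Some x then g x else q.

Lemma bO_cont : continuous g -> continuous bO.
Proof.
move=> gc [c|] N /= HN.
  exact: (gc c N HN).
split; first exact: nbhs_singleton HN.
exists N°; split; first exact: nbhs_interior.
exists (g @^-1` N°); split.
- by move/continuousP: gc; apply; apply: open_interior.
- by [].
- by move=> x /interior_subset.
Qed.

Lemma OC_P3 : closure (g @` F) q -> continuous g ->
  P3 (CMap Some_cont).
Proof.
move=> clq gc h Lh t b tc bc tb.
have [_ [[x Fx _] _]] := clq setT filterT.
have [r [rc rh]] := L_retract Lh (t x).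
have bS c : b (Some c) = cfun h (t c) by have := congr1 (fun k => k c) tb.
exists (fun p => r (b p)); split.
- by move=> p; apply: continuous_comp; [exact: bc|exact: rc].
- by apply/funext => c /=; rewrite bS rh.
- apply/funext => -[c|] /=; first by rewrite bS rh.
  have : closure (range (cfun h)) (b None).
    move=> N HN.
    have [_ [V [NV [W [oW sW wW]]]]] := bc None N HN.
    have [_ [[y Fy <-] Vgy]] := clq V NV.
    by exists (b (Some y)); split; [rewrite bS; exists (t y)|apply: wW; apply: sW].
  by move/(L_closed Lh) => [z _ <-]; rewrite rh.
Qed.
End OCSec2.

Lemma P4_closed g : P4 g -> forall F, closed F -> closed (cfun g @` F).
Proof.
move=> Pg F clF q clq.
pose f := CMap (@Some_cont _ _ (cfun g) F q).
have [] := Pg f (OC_P3 clq (@cfun_cont g)) (fun x => x) (@bO _ _ (cfun g) F q)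
  (@id_cont _) (bO_cont (@cfun_cont g)).
  by apply/funext.
move=> d [dc dS gd].
have gdN : cfun g (d None) = q by have := congr1 (fun k => k None) gd.
exists (d None) => //; apply: contrapT => nF.
have N : nbhs (d None) (~` F) by apply: open_nbhs_nbhs; split => //; rewrite openC.
have [_ [V [NV [W [oW sW wW]]]]] := dc None _ N.
have [_ [[y Fy <-] Vgy]] := clq V NV.
have := wW y (sW y Fy Vgy) => /=.
by have := congr1 (fun k => k y) dS => /= ->.
Qed.

Lemma P4_cinj g : P4 g -> cinj g.
Proof. by move=> Pg; split; [apply: P4_inj|apply: P4_closed]. Qed.

Lemma M_P5 : P5 M_map.
Proof. by move=> g /P4_cinj /cinj_liftM. Qed.

Definition OJ (X : Type) : Type := option (seq (bool + X)%type -> Prop).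

Definition small (X : Type) (A : set (seq (bool + X)%type -> Prop)) :=
  exists e : seq (bool + X)%type -> (seq (bool + X)%type -> Prop), forall j, A j -> exists l, e l = j.

Arguments small : clear implicits.

Section SmallSec.
Variable X : Type.
Implicit Types A B : set (seq (bool + X)%type -> Prop).

Lemma small_sub B A : small X B -> A `<=` B -> small X A.
Proof. by move=> [e he] AB; exists e => j /AB /he. Qed.

Lemma small0 : small X (set0 : set (seq (bool + X)%type -> Prop)).
Proof. by exists (fun _ _ => True) => j []. Qed.

Lemma small1 j : small X [set j].
Proof. by exists (fun _ => j) => j' ->; exists [::]. Qed.

Lemma smallU A B : small X A -> small X B -> small X (A `|` B).
Proof.
move=> [e1 h1] [e2 h2].
exists (fun l => match l with
  | inl true :: l' => e1 l'
  | inl false :: l' => e2 l'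
  | _ => e1 [::] end).
move=> j [/h1 [l <-]|/h2 [l <-]]; first by exists (inl true :: l).
by exists (inl false :: l).
Qed.

Lemma small_bigcup (A : X -> set (seq (bool + X)%type -> Prop)) :
  (forall x, small X (A x)) -> small X (\bigcup_x A x).
Proof.
move=> hA.
have [es hes] : exists es : X -> seq (bool + X)%type -> (seq (bool + X)%type -> Prop),
    forall x j, A x j -> exists l, es x l = j.
  have [es hes] := @choice _ _ (fun x e => forall j, A x j -> exists l, e l = j) hA.
  by exists es.
exists (fun l => match l with
  | inr x :: l' => es x l'
  | _ => fun _ => True end).
by move=> j [x _ /hes [l <-]]; exists (inr x :: l).
Qed.

Lemma not_smallT : ~ small X (setT : set (seq (bool + X)%type -> Prop)).
Proof.
move=> [e he].
have [l el] := he (fun l => ~ e l l) I.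
have H : e l l <-> ~ e l l by rewrite {1}el.
have nH : ~ e l l := fun H1 => proj1 H H1 H1.
exact: nH (proj2 H nH).
Qed.
End SmallSec.
Definition nbhsJ (X : Type) (p : OJ X) (A : set (OJ X)) : Prop :=
  match p with
  | Some j => A (Some j)
  | None => A None /\ small X [set j | ~ A (Some j)]
  end.

Section OJSec.
Variable X : Type.
Lemma nbhsJ_singleton (p : OJ X) A : nbhsJ p A -> A p.
Proof. by case: p => [j //|[]]. Qed.

Lemma nbhsJ_filter (p : OJ X) : ProperFilter (nbhsJ p).
Proof.
have Fi : Filter (nbhsJ p).
  case: p => [j|]; apply: Build_Filter => //=.
  - by move=> A B AB; apply: AB.
  - by split => //; exists (fun _ _ => True) => j /(_ I).
  - move=> A B [HA sA] [HB sB]; split => //.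
    refine (small_sub (smallU sA sB) _) => j /= nAB.
    by case: (pselect (A (Some j))) => [Aj|]; [right => Bj; apply: nAB|left].
  - move=> A B AB [HA sA]; split; first exact: AB.
    by refine (small_sub sA _) => j /= nB Aj; apply: nB; apply: AB.
apply: (@Build_ProperFilter_ex _ _ _ Fi) => A HA.
by exists p; apply: nbhsJ_singleton.
Qed.

Lemma nbhsJ_nbhs (p : OJ X) A : nbhsJ p A -> nbhsJ p (fun q : OJ X => nbhsJ q A).
Proof. by case: p => [j //|[HA sA]]; split. Qed.
End OJSec.

HB.instance Definition _ (X : Type) :=
  Choice.copy (OJ X) (option (seq (bool + X)%type -> Prop)).
HB.instance Definition _ (X : Type) := hasNbhs.Build (OJ X) (@nbhsJ X).
HB.instance Definition _ (X : Type) :=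
  Nbhs_isNbhsTopological.Build (OJ X)
  (@nbhsJ_filter X) (@nbhsJ_singleton X) (@nbhsJ_nbhs X).

Definition gk_map (X : Type) : cmap := CMap (@pt_cont (OJ X) (fun _ => None)).

Lemma gk_P4 (X : Type) : P4 (gk_map X).
Proof.
move=> f Pf t b tc bc tb.
have bN : forall p, b p = None.
  move=> p; case E: (b p) => [j|//]; exfalso.
  have oJ : open [set (Some j : OJ X)].
    by rewrite openE => q ->.
  have cJ : closed [set (Some j : OJ X)].
    rewrite -openC openE => -[j'|] /= nq.
      by [].
    split=> //; refine (small_sub (@small1 X j) _) => j' /= H.
    by apply: contrapT => nj; apply: H => -[].
  apply: (P3_clopen Pf (K := b @^-1` [set Some j])) (E).
  - by move/continuousP: bc; apply.
  - by move/continuous_closedP: bc; apply.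
  - move=> a /=; have := congr1 (fun h => h a) tb => /= <- //.
exists (fun _ => bullet); split.
- exact: cst_continuous.
- by apply/funext => a; apply: pt_eq.
- by apply/funext => p /=; rewrite bN.
Qed.

Lemma k_P6 : P6 k_map.
Proof.
move=> h Ph t b tc bc tb.
set X := csrc h.
have tbS : cfun h (t bullet) = b Sc by have := congr1 (fun k => k bullet) tb.
pose b' (p : OJ X) : ctgt h := if p is Some _ then b So else b Sc.
have bSo : forall N, nbhs (b Sc) N -> N (b So).
  move=> N HN; have : nbhs Sc (b @^-1` N) := bc Sc N HN.
  by move/(_ So I).
have b'c : continuous b'.
  move=> [j|] N /= HN.
    exact: nbhs_singleton HN.
  split; first exact: nbhs_singleton HN.
  by refine (small_sub (@small0 X) _) => j /=; apply; apply: bSo.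
have [] := Ph (gk_map X) (@gk_P4 X) t b' tc b'c.
  by apply/funext => u /=; rewrite (pt_eq u bullet).
move=> d [dc dg hd].
have d0 : d None = t bullet by have := congr1 (fun k => k bullet) dg.
have [x1 nx1] : exists x1, ~ small X [set j | d (Some j) = x1].
  apply: contrapT => H; apply: (@not_smallT X).
  have sx : forall x, small X [set j | d (Some j) = x].
    by move=> x; apply: contrapT => nx; apply: H; exists x.
  refine (small_sub (small_bigcup sx) _).
  by move=> j _; exists (d (Some j)).
have cl : forall N, nbhs (t bullet) N -> N x1.
  move=> N HN; apply: contrapT => nN; apply: nx1.
  rewrite -d0 in HN; have [_ sN] := dc None N HN.
  by refine (small_sub sN _) => j /= ->.
have hx1 : cfun h x1 = b So.
  case: (pselect (exists j, d (Some j) = x1)) => [[j <-]|nj].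
    by have := congr1 (fun k => k (Some j)) hd.
  by exfalso; apply: nx1; refine (small_sub (@small0 X) _) => j /= e; apply: nj; exists j.
exists (fun s => if s is So then x1 else t bullet); split.
- apply: (@alex_cont_from _ _ U_S) => // -[] q A /=.
    by move=> -> /nbhs_singleton.
  by case: q => _ HA; [apply: cl|apply: nbhs_singleton].
- by apply/funext => u /=; rewrite (pt_eq u bullet).
- by apply/funext => -[] /=.
Qed.
Lemma MM_dense f : orthw (single M_map) [:: l_; l_] f <-> dense_image f.
Proof.
split.
  move=> H; apply/kl_dense => g ->; apply: H.
  by move=> g' ->; apply: cinj_liftM; exact: k_cinj.
move=> df h Mh; apply: (dense_lift_cinj df); apply: liftM_cinj; exact: Mh.
Qed.

Lemma P7_dense f : P7 f <-> dense_image f.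
Proof.
split.
  by move=> H; apply/kl_dense => g ->; apply: H; exact: k_P6.
move=> df h Ph; apply: (dense_lift_cinj df); apply: liftM_cinj; apply: Ph.
exact: M_P5.
Qed.

Theorem mainTheorem16 :
  [/\ same_class (orthw (single iota_map) [:: r_; l_; l_; r_; r_; l_; l_])
                 (orthw (single M_map) [:: l_; l_]),
      same_class (orthw (single M_map) [:: l_; l_]) (orthw (single k_map) [:: l_])
    & same_class (orthw (single k_map) [:: l_]) dense_image].
Proof.
split => f.
- by rewrite orthw_eq P7_dense MM_dense.
- by rewrite MM_dense /=; split => /kl_dense.
- exact: kl_dense.
Qed.
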